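(* Let $\Omega$ be a convex domain in $\mathbb{R}^n$, let $\tau$ be a smooth symmetric $(0,2)$-tensor field on $\Omega$, and let $x_0\neq y_0$ be points of $\Omega$. Let $e_1,\dots,e_n$ be an orthonormal frame of $\mathbb{R}^n$ with $e_n=N(x_0,y_0)$, and let $\tilde E_n=(e_n,-e_n)\in\mathbb{R}^n\times\mathbb{R}^n$. Then $$\nabla_{\tilde E_n}\nabla_{\tilde E_n}E_{\tau}(x_0,y_0)=E_{\nabla_{e_n}\nabla_{e_n}\tau}(x_0,y_0).$$
   Context: For $x,y\in\mathbb{R}^n$ let $r(x,y)=\|x-y\|$, and for $x\neq y$ let $N(x,y)=\frac{y-x}{\|y-x\|}$ and $\theta(s,x,y)=x+sN(x,y)$. For a symmetric $(0,2)$-tensor field $\tau$ on $\Omega$, $E_\tau(x,y)=\int_0^{r(x,y)}\tau(\theta(s,x,y))(N(x,y),N(x,y))\,ds$, viewed as a function of $(x,y)\in\Omega\times\Omega$; $\nabla_{V}$ for $V\in\mathbb{R}^n\times\mathbb{R}^n$ denotes the directional derivative of a function of $(x,y)$ in direction $V$. $\nabla_{e_n}\nabla_{e_n}\tau$ is the second (Euclidean) covariant derivative of $\tau$ in direction $e_n$. *)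

(* Defs.v *)
From HB Require Import structures.
From mathcomp Require Import all_boot all_order all_algebra.
From mathcomp Require Import all_classical all_reals all_analysis.
Set Implicit Arguments. Unset Strict Implicit. Unset Printing Implicit Defensive.
Import Order.TTheory GRing.Theory Num.Theory.
Import numFieldNormedType.Exports.
Local Open Scope classical_set_scope.
Local Open Scope ring_scope.

Section Defs.
Variables (R : realType) (n : nat).
Notation V := 'rV[R]_n.

Definition edot (u v : V) : R := \sum_(i < n) u 0 i * v 0 i.
Definition enorm (u : V) : R := Num.sqrt (edot u u).

Definition rdist (x y : V) : R := enorm (x - y).
Definition Ndir (x y : V) : V := (enorm (y - x))^-1 *: (y - x).
Definition theta (s : R) (x y : V) : V := x + s *: Ndir x y.

(* a (0,2)-tensor field is represented by its matrix field in the
   standard basis: tau p (v,w) = v * (tau p) * w^T *)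
Definition tensor_app (A : 'M[R]_n) (v w : V) : R := (v *m A *m w^T) 0 0.

Definition Etau (tau : V -> 'M[R]_n) (xy : V * V) : R :=
  Rintegral (@lebesgue_measure R) `[0, rdist xy.1 xy.2]
    (fun s => tensor_app (tau (theta s xy.1 xy.2)) (Ndir xy.1 xy.2) (Ndir xy.1 xy.2)).

(* Euclidean second covariant derivative nabla_e nabla_e tau (entrywise) *)
Definition nabla2 (e : V) (tau : V -> 'M[R]_n) (p : V) : 'M[R]_n :=
  \matrix_(i, j) derive (fun q => derive (fun r => tau r i j) q e) p e.

Fixpoint Ck (k : nat) (O : set V) (f : V -> R) : Prop :=
  match k with
  | 0 => {in O, continuous f}
  | k'.+1 => {in O, continuous f} /\ (forall x, O x -> differentiable f x)
             /\ forall v : V, Ck k' O (fun x => derive f x v)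
  end.
Definition smooth_on (O : set V) (f : V -> R) : Prop := forall k, Ck k O f.

Definition orthonormal_frame (e : 'I_n -> V) : Prop :=
  forall i j, edot (e i) (e j) = (i == j)%:R.
End Defs.

(* Main.v *)
Require Import Defs.
From HB Require Import structures.
From mathcomp Require Import all_boot all_order all_algebra.
From mathcomp Require Import all_classical all_reals all_analysis.
From mathcomp Require Import ring lra.
Import Order.TTheory GRing.Theory Num.Theory.
Import numFieldNormedType.Exports.
Local Open Scope classical_set_scope.
Local Open Scope ring_scope.

Lemma cont_sum {R : realType} {m : nat} (h : 'I_m -> R -> R) (x : R) :
  (forall i, {for x, continuous (h i)}) -> {for x, continuous (fun y => \sum_i h i y)}.
Proof.
move=> H; rewrite -fct_sumE; elim/big_ind: _ => //.
- exact: cst_continuous.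
- by move=> f g; apply: continuousD.
Qed.

Lemma is_derive_sum1 {R : realType} {m : nat} (h : 'I_m -> R -> R) (x : R) (dh : 'I_m -> R) :
  (forall i, is_derive x 1 (h i) (dh i)) -> is_derive x 1 (fun y => \sum_i h i y) (\sum_i dh i).
Proof. by move=> H; rewrite -fct_sumE; apply: is_derive_sum. Qed.

Lemma cont_scal {R : realType} (c : R) (h : R -> R) (x : R) :
  {for x, continuous h} -> {for x, continuous (fun y => c * h y)}.
Proof. by move=> H; apply: continuousM => //; exact: cst_continuous. Qed.

Lemma is_derive_scal {R : realType} (c : R) (h : R -> R) (x d : R) :
  is_derive x 1 h d -> is_derive x 1 (fun y => c * h y) (c * d).
Proof. by move=> H; have := is_deriveZ c H. Qed.

Lemma tensor_app_sum {R : realType} {m : nat} (A : 'M[R]_m) (v w : 'rV[R]_m) :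
  tensor_app A v w = \sum_j \sum_i (v 0 i * w 0 j) * A i j.
Proof.
rewrite /tensor_app !mxE; apply: eq_bigr => j _; rewrite !mxE big_distrl /=.
by apply: eq_bigr => i _; rewrite mulrAC mulrC mulrA.
Qed.

Lemma edotZ {R : realType} {m : nat} (u : 'rV[R]_m) (c : R) :
  edot (c *: u) (c *: u) = c ^+ 2 * edot u u.
Proof.
rewrite /edot mulr_sumr; apply: eq_bigr => i _; rewrite !mxE; ring.
Qed.

Lemma enormZ1 {R : realType} {m : nat} (u : 'rV[R]_m) (c : R) :
  edot u u = 1 -> enorm (c *: u) = `|c|.
Proof. by move=> H; rewrite /enorm edotZ H mulr1 sqrtr_sqr. Qed.

Lemma enormN {R : realType} {m : nat} (u : 'rV[R]_m) : enorm (- u) = enorm u.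
Proof. by rewrite -scaleN1r /enorm edotZ expr2 mulN1r opprK mul1r. Qed.

Lemma line_quot {R : realType} {W : normedModType R} (f : W -> R) (a v : W) (t : R) :
  (fun h : R => h^-1 *: (((fun s : R => f (a + s *: v)) \o shift t) (h *: 1) - (fun s : R => f (a + s *: v)) t))
  = (fun h => h^-1 *: ((f \o shift (a + t *: v)) (h *: v) - f (a + t *: v))).
Proof.
apply/funext => h /=; congr (_ *: (_ - _)); congr f.
by rewrite /= [h *: 1]mulr1 scalerDl addrCA.
Qed.

Lemma line_derive {R : realType} {W : normedModType R} (f : W -> R) (a v : W) (t : R) :
  derive1 (fun s : R => f (a + s *: v)) t = derive f (a + t *: v) v.
Proof. by rewrite derive1E /derive line_quot. Qed.

Lemma line_derivable {R : realType} {W : normedModType R} (f : W -> R) (a v : W) (t : R) :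
  derivable (fun s : R => f (a + s *: v)) t 1 <-> derivable f (a + t *: v) v.
Proof. by rewrite /derivable line_quot. Qed.

Lemma line_cont {R : realType} {W : normedModType R} (f : W -> R) (a v : W) (t : R) :
  {for (a + t *: v), continuous f} -> {for t, continuous (fun s : R => f (a + s *: v))}.
Proof.
move=> cf.
have -> : (fun s : R => f (a + s *: v)) = f \o (fun s : R => a + s *: v) by [].
apply: continuous_comp => //.
apply: continuousD; first exact: cst_continuous.
by apply: continuousZr_tmp.
Qed.

Definition Fm {R : realType} {m : nat} (M : 'rV[R]_m -> 'M[R]_m) (x0 e : 'rV[R]_m) (u : R) : R :=
  tensor_app (M (x0 + u *: e)) e e.
Definition Dm {R : realType} {m : nat} (M : 'rV[R]_m -> 'M[R]_m) (e : 'rV[R]_m) : 'rV[R]_m -> 'M[R]_m :=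
  fun p => \matrix_(i, j) derive (fun q => M q i j) p e.

Lemma FmE {R : realType} {m : nat} (M : 'rV[R]_m -> 'M[R]_m) (x0 e : 'rV[R]_m) :
  Fm M x0 e = fun u => \sum_j \sum_i (e 0 i * e 0 j) * M (x0 + u *: e) i j.
Proof. by apply/funext => u; rewrite /Fm tensor_app_sum. Qed.

Lemma Fm_cont {R : realType} {m : nat} (M : 'rV[R]_m -> 'M[R]_m) (x0 e : 'rV[R]_m) (u : R) :
  (forall i j, {for x0 + u *: e, continuous (fun p => M p i j)}) ->
  {for u, continuous (Fm M x0 e)}.
Proof.
move=> H; rewrite FmE; apply: cont_sum => j; apply: cont_sum => i; apply: cont_scal.
exact: (@line_cont _ _ (fun p => M p i j)).
Qed.

Lemma Fm_derive {R : realType} {m : nat} (M : 'rV[R]_m -> 'M[R]_m) (x0 e : 'rV[R]_m) (u : R) :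
  (forall i j, differentiable (fun p => M p i j) (x0 + u *: e)) ->
  is_derive u 1 (Fm M x0 e) (Fm (Dm M e) x0 e u).
Proof.
move=> H; rewrite [in X in is_derive _ _ X]FmE (FmE (Dm M e)).
apply: is_derive_sum1 => j; apply: is_derive_sum1 => i; apply: is_derive_scal.
rewrite mxE; apply: DeriveDef.
  by apply/(line_derivable (fun p => M p i j)); apply: diff_derivable.
by rewrite -derive1E (line_derive (fun p => M p i j)).
Qed.

Lemma near_derive1 {R : realType} (f g : R -> R) (x c : R) : 0 < c ->
  (forall y, `|y - x| < c -> f y = g y) ->
  derive1 f x = derive1 g x /\ (derivable f x 1 -> derivable g x 1).
Proof.
move=> c0 fg.
have N : \forall y \near x, f y = g y.
  apply/nbhs_ballP; exists c => // y /=; rewrite /ball /= => H.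
  by apply: fg; rewrite distrC.
split; first by rewrite !derive1E; apply: near_eq_derive.
exact: near_eq_derivable.
Qed.

Lemma shift_fun {R : realType} (f : R -> R) (t : R) :
  (fun s => f (t + s)) = (fun s => f (t + s *: 1)).
Proof. by apply/funext => s; rewrite [s *: 1]mulr1. Qed.

Lemma shift_derivable {R : realType} (f : R -> R) (t s : R) :
  derivable f (t + s) 1 -> derivable (fun s => f (t + s)) s 1.
Proof.
by move=> H; rewrite shift_fun; apply/(line_derivable f); rewrite [s *: 1]mulr1.
Qed.

Lemma shift_derive1 {R : realType} (f : R -> R) (t s : R) :
  derive1 (fun s => f (t + s)) s = derive1 f (t + s).
Proof. by rewrite shift_fun line_derive [s *: 1]mulr1 derive1E. Qed.

Lemma shift_cont {R : realType} (f : R -> R) (t s : R) :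
  {for t + s, continuous f} -> {for s, continuous (fun s => f (t + s))}.
Proof.
by move=> H; rewrite shift_fun; apply: (line_cont f); rewrite [s *: 1]mulr1.
Qed.

Lemma refl_derive {R : realType} (f : R -> R) (c t : R) :
  derivable f (c - t) 1 ->
  derivable (fun s : R => f (c + s *: -1)) t 1 /\
  derive1 (fun s : R => f (c + s *: -1)) t = - derive1 f (c - t).
Proof.
move=> H; have ct : c + t *: -1 = c - t by rewrite [t *: -1]mulrN1.
have D : differentiable f (c - t) by apply/derivable1_diffP.
split.
  by apply/(line_derivable f); rewrite ct; apply: diff_derivable.
rewrite line_derive ct derive1E !deriveE //.
by rewrite linearN.
Qed.

Lemma deriv_cont {R : realType} (f : R -> R) (x : R) :
  derivable f x 1 -> {for x, continuous f}.
Proof. by move=> /derivable1_diffP; apply: differentiable_continuous. Qed.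

Lemma modeq {R : realType} {m : nat} (x0 v : 'rV[R]_m) r0 t :
  x0 + r0 *: v - t *: v - (x0 + t *: v) = (r0 - (t + t)) *: v.
Proof.
by rewrite scalerBl scalerDl opprD addrAC addrA [x0 + _]addrC addrK opprD addrA.
Qed.

Lemma derive1B' {R : realType} (f g : R -> R) (x : R) :
  derivable f x 1 -> derivable g x 1 ->
  derivable (fun s => f s - g s) x 1 /\
  derive1 (fun s => f s - g s) x = derive1 f x - derive1 g x.
Proof.
move=> df dg.
have := @is_deriveB R R R f g x 1 _ _ (derivableP df) (derivableP dg).
by case => H1 H2; split => //; rewrite !derive1E.
Qed.
Lemma derive1NB' {R : realType} (f g : R -> R) (x : R) :
  derivable f x 1 -> derivable g x 1 ->
  derive1 (fun s => - f s - g s) x = - derive1 f x - derive1 g x.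
Proof.
move=> df dg.
have := @is_deriveB R R R (fun s => - f s) g x 1 _ _ (@is_deriveN R R R f x 1 _ (derivableP df)) (derivableP dg).
by case => H1 H2; rewrite !derive1E.
Qed.
Lemma in_ab {R : realType} {d r0 u : R} : 0 < d -> 0 <= u -> u <= r0 -> - d < u /\ u < r0 + d.
Proof. move=> *; split; lra. Qed.
Lemma min_pos {R : realType} {d r0 u : R} : - d < u -> u < r0 + d -> 0 < Num.min (u + d) (r0 + d - u).
Proof. by move=> h1 h2; rewrite lt_min; apply/andP; split; lra. Qed.
Lemma in_min {R : realType} {d r0 u y : R} : `|y - u| < Num.min (u + d) (r0 + d - u) -> - d < y /\ y < r0 + d.
Proof. rewrite lt_min => /andP[]; rewrite !ltr_norml => /andP[y1 y2] /andP[y3 y4]; split; lra. Qed.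
Lemma in_shift {R : realType} {d r0 t s : R} : d * 2 <= r0 -> - d < t -> t < d -> 0 <= s -> s <= r0 - (t + t) ->
  - d < t + s /\ t + s < r0 + d.
Proof. move=> *; split; lra. Qed.

Theorem theorem2p5 (R : realType) (n : nat) (Omega : set 'rV[R]_n.+1)
  (tau : 'rV[R]_n.+1 -> 'M[R]_n.+1) (x0 y0 : 'rV[R]_n.+1)
  (e : 'I_n.+1 -> 'rV[R]_n.+1) :
  open Omega -> convex_set Omega ->
  (forall i j, smooth_on Omega (fun p => tau p i j)) ->
  (forall p, Omega p -> (tau p)^T = tau p) ->
  Omega x0 -> Omega y0 -> x0 != y0 ->
  orthonormal_frame e -> e ord_max = Ndir x0 y0 ->
  let En := (e ord_max, - e ord_max) in
  derive (fun xy => derive (Etau tau) xy En) (x0, y0) En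
  = Etau (nabla2 (e ord_max) tau) (x0, y0).
Proof.
move=> oO cO sm _ Ox0 Oy0 xy ortho eE En.
rewrite /En; move: eE; set v := e ord_max => eE.
have ee : edot v v = 1 by rewrite ortho eqxx.
set r0 := enorm (y0 - x0).
have r0n0 : r0 != 0.
  apply/eqP => r00; move: ee; rewrite eE /Ndir -/r0 r00 invr0 scale0r.
  by rewrite /edot big1 => [/esym/eqP|i _]; rewrite ?oner_eq0 // mxE mul0r.
have r0gt : 0 < r0 by rewrite lt_neqAle eq_sym r0n0 sqrtr_ge0.
have y0E : y0 = x0 + r0 *: v.
  by rewrite eE /Ndir -/r0 scalerA divff // scale1r addrC subrK.
have Sm : forall i j, [/\ {in Omega, continuous (fun p => tau p i j)},
   (forall p, Omega p -> differentiable (fun p => tau p i j) p),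
   {in Omega, continuous (fun p => derive (fun q => tau q i j) p v)},
   (forall p, Omega p -> differentiable (fun p => derive (fun q => tau q i j) p v) p) &
   {in Omega, continuous (fun p => derive (fun q => derive (fun r => tau r i j) q v) p v)}].
  move=> i j; have [c1 [d1 /(_ v) [c2 [d2 /(_ v) c3]]]] := sm i j 2%N.
  by split.
set phi := Fm tau x0 v.
set phi1 := Fm (Dm tau v) x0 v.
set psi := Fm (Dm (Dm tau v) v) x0 v.
have E1 : forall i j, (fun p => Dm tau v p i j) = (fun p => derive (fun q => tau q i j) p v).
  by move=> i j; apply/funext => p; rewrite mxE.
have E2 : forall i j, (fun p => Dm (Dm tau v) v p i j) =
    (fun p => derive (fun q => derive (fun r => tau r i j) q v) p v).
  by move=> i j; apply/funext => p; rewrite mxE E1.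
have C0 : forall u, Omega (x0 + u *: v) -> {for u, continuous phi}.
  move=> u Ou; apply: Fm_cont => i j.
  by have [c1 _ _ _ _] := Sm i j; apply: c1; rewrite inE.
have C2 : forall u, Omega (x0 + u *: v) -> {for u, continuous psi}.
  move=> u Ou; apply: Fm_cont => i j; rewrite E2.
  by have [_ _ _ _ c3] := Sm i j; apply: c3; rewrite inE.
have D0 : forall u, Omega (x0 + u *: v) -> is_derive u 1 phi (phi1 u).
  move=> u Ou; apply: Fm_derive => i j.
  by have [_ d1 _ _ _] := Sm i j; apply: d1.
have D1 : forall u, Omega (x0 + u *: v) -> is_derive u 1 phi1 (psi u).
  move=> u Ou; apply: Fm_derive => i j; rewrite E1.
  by have [_ _ _ d2 _] := Sm i j; apply: d2.
have oS : open [set u : R | Omega (x0 + u *: v)].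
  apply: (@open_comp _ _ (fun u : R => x0 + u *: v)) => // u _.
  apply: (@continuousD _ _ _ (cst x0) (fun u : R => u *: v)); first exact: cst_continuous.
  by apply: continuousZr_tmp.
have Bl : forall w, Omega (x0 + w *: v) ->
    exists2 d, 0 < d & forall u, `|u - w| < d -> Omega (x0 + u *: v).
  move=> w Ow; move: oS; rewrite openE => /(_ w Ow) /nbhs_ballP [d d0 Hd].
  by exists d => // u uw; apply: Hd; rewrite /ball /= distrC.
have [d0 d0p B0] := Bl 0 ltac:(by rewrite scale0r addr0).
have [d1 d1p B1] := Bl r0 ltac:(by rewrite -y0E).
set d := Num.min (Num.min d0 d1) r0 / 2.
have [dp hd0 hd1 hd2] : [/\ 0 < d, d * 2 <= d0, d * 2 <= d1 & d * 2 <= r0].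
  rewrite /d divrK ?unitfE ?pnatr_eq0 //; split.
  - by rewrite divr_gt0 // !lt_min d0p d1p r0gt.
  - by rewrite !ge_min lexx.
  - by rewrite !ge_min lexx orbT.
  - by rewrite !ge_min lexx orbT.
have SI : forall u, - d <= u <= r0 + d -> Omega (x0 + u *: v).
  move=> u /andP[u1 u2].
  have [u0|u0] := ltP u 0.
    by apply: B0; rewrite subr0 ltr0_norm //; lra.
  have [ur|ur] := ltP r0 u.
    by apply: B1; rewrite gtr0_norm ?subr_gt0 //; lra.
  have H0 : 0 <= u / r0 by rewrite divr_ge0 // ltW.
  have H1 : u / r0 <= 1 by rewrite ler_pdivrMr // mul1r.
  have := cO y0 x0 (Itv01 H0 H1) (mem_set Oy0) (mem_set Ox0); rewrite inE.
  congr Omega; rewrite /= y0E.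
  change ((u / r0) *: (x0 + r0 *: v) + (1 - u / r0) *: x0 = x0 + u *: v).
  by rewrite scalerDr scalerA divfK // scalerBl scale1r addrC addrA subrK.
have cphi : {within `[- d, r0 + d], continuous phi}.
  apply: continuous_in_subspaceT => u; rewrite inE /= in_itv /= => hu.
  by apply: C0; apply: SI.
have intphi : (@lebesgue_measure R).-integrable `[- d, r0 + d] (EFin \o phi).
  apply: continuous_compact_integrable; first exact: segment_compact.
  exact: cphi.
set Phi := fun x => \int[@lebesgue_measure R]_(t in `[- d, x]) phi t.
have FT1 : forall x, - d < x -> x < r0 + d -> derivable Phi x 1 /\ derive1 Phi x = phi x.
  move=> x h1 h2; apply: (continuous_FTC1_closed h2 intphi h1).
  by apply: C0; apply: SI; rewrite !ltW.
have gE : forall t, `|t| < d ->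
    Etau tau (x0 + t *: v, y0 - t *: v) = Phi (r0 - t) - Phi t.
  move=> t; rewrite ltr_norml => /andP[ht1 ht2].
  have rp : 0 < r0 - (t + t) by lra.
  have YX : y0 - t *: v - (x0 + t *: v) = (r0 - (t + t)) *: v by rewrite y0E modeq.
  have NX : Ndir (x0 + t *: v) (y0 - t *: v) = v.
    by rewrite /Ndir YX enormZ1 // gtr0_norm // scalerA mulVf ?gt_eqF // scale1r.
  have RX : rdist (x0 + t *: v) (y0 - t *: v) = r0 - (t + t).
    by rewrite /rdist -opprB enormN YX enormZ1 // gtr0_norm.
  rewrite /Etau /= RX NX /theta NX.
  have -> : (fun s => tensor_app (tau (x0 + t *: v + s *: v)) v v) = (fun s => phi (t + s)).
    by apply/funext => s; rewrite /phi /Fm scalerDl addrA.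
  have cF : forall s, 0 <= s <= r0 - (t + t) -> derivable (fun s => Phi (t + s)) s 1.
    move=> s /andP[s1 s2]; apply: shift_derivable.
    by have [h1 h2] := in_shift hd2 ht1 ht2 s1 s2; exact: (FT1 (t + s) h1 h2).1.
  rewrite /Rintegral (@continuous_FTC2 _ _ (fun s => Phi (t + s))) //.
  - by rewrite -EFinB /= addr0; congr (Phi _ - _); lra.
  - apply: continuous_in_subspaceT => s; rewrite inE /= in_itv /= => /andP[s1 s2].
    by apply: shift_cont; apply: C0; apply: SI; lra.
  - split.
    + by move=> s; rewrite in_itv /= => /andP[s1 s2]; apply: cF; rewrite !ltW.
    + exact: cvg_at_right_filter (@deriv_cont _ _ _ (cF 0 ltac:(by rewrite lexx ltW))).
    + exact: cvg_at_left_filter (@deriv_cont _ _ _ (cF (r0 - (t + t)) ltac:(by rewrite lexx ltW))).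
  - move=> s; rewrite in_itv /= => /andP[s1 s2].
    have [h1 h2] := in_shift hd2 ht1 ht2 (ltW s1) (ltW s2).
    by rewrite shift_derive1; exact: (FT1 (t + s) h1 h2).2.
have Dphi : forall u, Omega (x0 + u *: v) -> derivable phi u 1 /\ derive1 phi u = phi1 u.
  move=> u Ou; have [H1 H2] := D0 u Ou; split => //; by rewrite derive1E.
set A := fun t : R => Phi (r0 + t *: -1).
set G := fun t : R => A t - Phi t.
set B := fun t : R => phi (r0 + t *: -1).
set H := fun t : R => - B t - phi t.
have gG : forall t, `|t| < d -> Etau tau ((x0, y0) + t *: (v, - v)) = G t.
  move=> t ht.
  have -> : (x0, y0) + t *: (v, - v) = (x0 + t *: v, y0 - t *: v).
    by change ((x0 + t *: v, y0 + t *: - v) = (x0 + t *: v, y0 - t *: v)); rewrite scalerN.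
  rewrite gE // /G /A; congr (Phi (_ + _) - _); exact: (esym (mulrN1 t)).
have DG : forall t, `|t| < d -> derive1 G t = H t.
  move=> t; rewrite ltr_norml => /andP[ht1 ht2].
  have [a1 a2] := FT1 t ltac:(lra) ltac:(lra).
  have [b1 b2] := FT1 (r0 - t) ltac:(lra) ltac:(lra).
  have [c1 c2] := @refl_derive _ _ _ _ b1.
  have [_ ->] := @derive1B' _ A Phi t c1 a1.
  by rewrite c2 b2 a2 /H /B [t *: -1]mulrN1.
set g := fun s : R => Etau tau ((x0, y0) + s *: (v, - v)).
have L1 : forall F : 'rV[R]_n.+1 * 'rV[R]_n.+1 -> R,
    derive F (x0, y0) (v, - v) = derive1 (fun s => F ((x0, y0) + s *: (v, - v))) 0.
  by move=> F; rewrite line_derive scale0r addr0.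
have LHS : derive (fun xy => derive (Etau tau) xy (v, - v)) (x0, y0) (v, - v) = derive1 H 0.
  rewrite L1.
  have -> : (fun s => derive (Etau tau) ((x0, y0) + s *: (v, - v)) (v, - v)) = derive1 g.
    by apply/funext => s; rewrite /g line_derive.
  apply: (@near_derive1 _ _ _ _ _ dp _).1 => y; rewrite subr0 => hy.
  have cp : 0 < d - `|y| by rewrite subr_gt0.
  rewrite -(DG y hy); apply: (@near_derive1 _ _ _ _ _ cp _).1 => z hz.
  apply: gG; have := ler_normD (z - y) y; rewrite subrK; lra.
have Sc : forall u, - d < u -> u < r0 + d -> Omega (x0 + u *: v).
  by move=> u h1 h2; apply: SI; apply/andP; split; lra.
have H0 : derive1 H 0 = phi1 r0 - phi1 0.
  have [p0 p0'] := Dphi 0 ltac:(by rewrite scale0r addr0).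
  have [pr pr'] := Dphi r0 ltac:(by rewrite -y0E).
  have [b1 b2] := @refl_derive _ phi r0 0 ltac:(by rewrite subr0).
  by rewrite (@derive1NB' _ B phi 0 b1 p0) b2 subr0 pr' p0' opprK.
have dphi : forall u, - d < u -> u < r0 + d ->
    derivable (derive1 phi) u 1 /\ derive1 (derive1 phi) u = psi u.
  move=> u h1 h2.
  have cp := min_pos h1 h2.
  have E : forall y, `|y - u| < Num.min (u + d) (r0 + d - u) -> phi1 y = derive1 phi y.
    move=> y /in_min [y1 y2].
    by rewrite (Dphi y (Sc y y1 y2)).2.
  have [N1 N2] := @near_derive1 _ phi1 (derive1 phi) u _ cp E.
  have [q1 q2] := D1 u (Sc u h1 h2).
  by split; [exact: N2 | rewrite -N1 derive1E].
have N2 : nabla2 v tau = Dm (Dm tau v) v.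
  apply/funext => p; apply/matrixP => i j; rewrite !mxE.
  by congr derive; apply/funext => q; rewrite mxE.
have RHS : Etau (nabla2 v tau) (x0, y0) = phi1 r0 - phi1 0.
  have [p0 p0'] := Dphi 0 ltac:(by rewrite scale0r addr0).
  have [pr pr'] := Dphi r0 ltac:(by rewrite -y0E).
  have FT : (\int[@lebesgue_measure R]_(x in `[0%R, r0]) (psi x)%:E)%E
      = ((derive1 phi r0)%:E - (derive1 phi 0%R)%:E)%E.
    apply: (@continuous_FTC2 R psi (derive1 phi) 0 r0 r0gt).
    - apply: continuous_in_subspaceT => u; rewrite inE /= in_itv /= => /andP[u1 u2].
      by have [h1 h2] := in_ab dp u1 u2; apply: C2; apply: Sc.
    - split.
      + move=> u; rewrite in_itv /= => /andP[u1 u2].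
        by have [h1 h2] := in_ab dp (ltW u1) (ltW u2); apply: (dphi u h1 h2).1.
      + have [h1 h2] := in_ab dp (lexx 0) (ltW r0gt).
        exact: cvg_at_right_filter (@deriv_cont _ _ _ (dphi 0 h1 h2).1).
      + have [h1 h2] := in_ab dp (ltW r0gt) (lexx r0).
        exact: cvg_at_left_filter (@deriv_cont _ _ _ (dphi r0 h1 h2).1).
    - move=> u; rewrite in_itv /= => /andP[u1 u2].
      by have [h1 h2] := in_ab dp (ltW u1) (ltW u2); apply: (dphi u h1 h2).2.
  rewrite /Etau /= /theta -eE /rdist -opprB enormN -/r0 N2.
  transitivity (\int[@lebesgue_measure R]_(s in `[0, r0]) psi s); first by [].
  by rewrite /Rintegral FT -EFinB /= pr' p0'.
by rewrite LHS RHS H0.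
Qed.
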